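(* Let $M\ge 2$ and let $T$ be a positive even integer. For $k=0,1,\dots,T/2$ put $\omega_k=2\pi k/T$. Let $A_{ijk}\ge 0$ and $\phi_{ijk}\in\mathbb{R}$ be given for $1\le i,j\le M$, $0\le k\le T/2$. For $\boldsymbol{\tau}=(\tau_1,\dots,\tau_M)\in\mathbb{R}^M$ write $\tau_{ij}=\tau_j-\tau_i$, and define $$\mathcal{J}(\boldsymbol{\tau})=\frac{1}{T}\sum_{k=0}^{T/2}\sum_{i=1}^{M}\sum_{j=1}^{M}A_{ijk}\cos(\omega_k\tau_{ij}+\phi_{ijk}).$$ For auxiliary variables $\boldsymbol{\theta}=(\theta_{ijk})$ with $\theta_{ijk}\in[-\pi,\pi]$, define $$Q(\boldsymbol{\tau},\boldsymbol{\theta})=\frac{1}{T}\sum_{k=0}^{T/2}\sum_{i=1}^{M}\sum_{j=1}^{M}\Big\{-B_{ijk}\big(\omega_k\tau_{ij}+\phi_{ijk}+2\nu_{ijk}\pi\big)^2+A_{ijk}\big(\cos\theta_{ijk}+\tfrac12\theta_{ijk}\sin\theta_{ijk}\big)\Big\},\qquad B_{ijk}=\frac{A_{ijk}}{2}\frac{\sin\theta_{ijk}}{\theta_{ijk}},$$ where $\sin\theta/\theta$ is interpreted as $1$ at $\theta=0$, and where, for the given $\boldsymbol{\tau}$, $\nu_{ijk}\in\mathbb{Z}$ is chosen such that $|\omega_k\tau_{ij}+\phi_{ijk}+2\nu_{ijk}\pi|\le\pi$. Then $Q$ is an auxiliary function for $\mathcal{J}$: $\mathcal{J}(\boldsymbol{\tau})\ge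 Q(\boldsymbol{\tau},\boldsymbol{\theta})$ for every $\boldsymbol{\tau}\in\mathbb{R}^M$ and every such $\boldsymbol{\theta}$, and $Q(\boldsymbol{\tau},\boldsymbol{\theta})=\mathcal{J}(\boldsymbol{\tau})$ holds when $\theta_{ijk}=\omega_k\tau_{ij}+\phi_{ijk}+2\nu_{ijk}\pi$ for all $i,j,k$.
   Context: This arises in time-delay estimation: $\tau_i$ are time delays (relative to a reference sensor) at $M$ sensors, and in the paper $A_{ijk}=\beta_k a_{ik}a_{jk}|V_{ijk}|$, $\phi_{ijk}=\angle V_{ijk}$, where $V_{ijk}$ are entries of the Hermitian spatial covariance matrix of the observations at frequency $k$, $a_{ik}\ge 0$ are relative amplitudes, and $\beta_0=\beta_{T/2}=1$, $\beta_k=2$ otherwise; $\mathcal{J}$ is then (up to a positive constant factor for fixed amplitudes) the multichannel cross-correlation objective. Only $A_{ijk}\ge0$ is needed for the statement. *)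

(* Defs.v *)
From mathcomp Require Import all_boot all_order all_algebra.
From mathcomp Require Import all_classical all_reals all_analysis.
Set Implicit Arguments. Unset Strict Implicit. Unset Printing Implicit Defensive.
Import Order.TTheory GRing.Theory Num.Theory.
Local Open Scope ring_scope.

Section Defs.
Variable R : realType.

Definition omega (T k : nat) : R := 2 * pi * k%:R / T%:R.

Definition sinc (t : R) : R := if t == 0 then 1 else sin t / t.

Variables (M T : nat).
Variables (A phi : 'I_M -> 'I_M -> 'I_(T./2).+1 -> R).

Definition phase (tau : 'I_M -> R) i j (k : 'I_(T./2).+1) : R :=
  omega T k * (tau j - tau i) + phi i j k.

Definition Jobj (tau : 'I_M -> R) : R :=
  T%:R^-1 * \sum_(k < (T./2).+1) \sum_(i < M) \sum_(j < M)
    A i j k * cos (phase tau i j k).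

Definition Bcoef (theta : 'I_M -> 'I_M -> 'I_(T./2).+1 -> R) i j k : R :=
  A i j k / 2 * sinc (theta i j k).

Definition Qaux (tau : 'I_M -> R) (theta : 'I_M -> 'I_M -> 'I_(T./2).+1 -> R)
    (nu : 'I_M -> 'I_M -> 'I_(T./2).+1 -> int) : R :=
  T%:R^-1 * \sum_(k < (T./2).+1) \sum_(i < M) \sum_(j < M)
    (- Bcoef theta i j k * (phase tau i j k + 2 * (nu i j k)%:~R * pi) ^+ 2
     + A i j k * (cos (theta i j k) + 2^-1 * theta i j k * sin (theta i j k))).
End Defs.

(* Main.v *)
Set Warnings "-all".
Require Import Defs.
From mathcomp Require Import all_boot all_order all_algebra.
From mathcomp Require Import all_classical all_reals all_analysis.
From mathcomp Require Import ring lra.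
Import Order.TTheory GRing.Theory Num.Theory.
Local Open Scope ring_scope.

Section S.
Variable R : realType.

Lemma mono_up (f df : R -> R) (a b : R) :
  (forall x, a <= x <= b -> is_derive x 1 f (df x)) ->
  (forall x, a < x < b -> 0 <= df x) ->
  forall x y, a <= x -> x <= y -> y <= b -> f x <= f y.
Proof.
move=> H Hd x y ax xy yb.
apply: (ger0_derive1_ndecr (a:=a) (b:=b)) => //.
- move=> z; rewrite in_itv /= => /andP[az zb].
  by case: (H z _) => //; rewrite !ltW.
- move=> z; rewrite in_itv /= => /andP[az zb].
  rewrite derive1E; case: (H z _) => [|_ ->]; first by rewrite !ltW.
  by apply: Hd; rewrite az zb.
- apply: derivable_within_continuous => z.
  rewrite in_itv /= => hz.
  by case: (H z hz).
Qed.

Lemma k_ge0 (t : R) : 0 <= t <= pi -> 0 <= sin t - t * cos t.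
Proof.
move=> /andP[t0 tp].
suff H : (sin - id * cos : R -> R) 0 <= (sin - id * cos) t.
  by move: H; rewrite !fctE sin0 mul0r subr0.
apply: (@mono_up _ (fun t => t * sin t) 0 pi) => //.
- move=> x _; apply: is_derive_eq.
  change (cos x - (x * - sin x + cos x * 1) = x * sin x); lra.
- move=> x /andP[x0 xp]; apply: mulr_ge0; first exact: ltW.
  by apply: sin_ge0_pi; rewrite !ltW.
Qed.

Lemma is_derive_inv (x : R) : x != 0 -> is_derive x 1 (fun y : R => y^-1) (- x ^- 2).
Proof.
move=> x0; apply: DeriveDef.
  by apply: (derivableV (f:=fun y : R => y)) => //; exact: derivable_id.
rewrite (deriveV (f:=fun y : R => y)) // derive_id.
change (- x ^- 2 * 1 = - x ^- 2); by rewrite mulr1.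
Qed.

Lemma sinc_mono (u v : R) : 0 < u -> u <= v -> v <= pi -> sin v / v <= sin u / u.
Proof.
move=> u0 uv vp.
suff H : (- (sin * (fun y : R => y^-1))) u <= (- (sin * (fun y : R => y^-1))) v.
  by move: H; rewrite !fctE lerN2.
apply: (@mono_up _ (fun t => (sin t - t * cos t) / t^+2) u v) => //.
- move=> x /andP[ux xv]; have hx : x != 0 by rewrite gt_eqF // (lt_le_trans u0).
  have Hi := is_derive_inv x hx.
  apply: is_derive_eq.
  change (- (sin x * - x ^- 2 + x^-1 * cos x) = (sin x - x * cos x) / x ^+ 2).
  by field.
- move=> x /andP[ux xv]; apply: divr_ge0; last exact: sqr_ge0.
  by apply: k_ge0; rewrite (ltW (lt_le_trans xv vp)) andbT ltW // (lt_trans u0).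
Qed.

Lemma sin_le_id (x : R) : 0 <= x -> sin x <= x.
Proof.
move=> x0.
suff H : (id - sin : R -> R) 0 <= (id - sin) x.
  by move: H; rewrite !fctE sin0 subr0 subr_ge0.
apply: (@mono_up _ (fun t => 1 - cos t) 0 x) => //.
all: try (move=> t _; apply: is_derive_eq; by change (1 - cos t = 1 - cos t)).
all: try (by move=> t _; rewrite subr_ge0 cos_le1).
Qed.

Lemma sinc_mul (t : R) : sinc t * t = sin t.
Proof.
rewrite /sinc; case: eqP => [->|/eqP t0]; first by rewrite sin0 mulr0.
by rewrite divfK.
Qed.

Lemma sincN (t : R) : sinc (- t) = sinc t.
Proof.
rewrite /sinc oppr_eq0; case: eqP => // _.
by rewrite sinN invrN mulrNN.
Qed.

Lemma sinc_norm (t : R) : sinc `|t| = sinc t.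
Proof. by case: (ler0P t) => _; rewrite ?sincN. Qed.

Lemma core (x t : R) : 0 <= x <= pi -> 0 <= t <= pi ->
  cos t + 2^-1 * t * sin t <= cos x + sinc t / 2 * x ^+ 2.
Proof.
move=> /andP[x0 xp] /andP[t0 tp].
set c := sinc t.
have ct : c * t = sin t by exact: sinc_mul.
have -> : cos t + 2^-1 * t * sin t = cos t + c / 2 * t ^+ 2.
  by rewrite -ct; field.
have key : forall y, y > 0 -> y <= pi -> (y < t -> c * y <= sin y) /\ (t < y -> sin y <= c * y).
  move=> y y0 yp; split => yt.
  - have tpos : 0 < t by apply: lt_trans yt.
    rewrite /c /sinc gt_eqF //.
    have := @sinc_mono y t y0 (ltW yt) tp.
    by rewrite ler_pdivlMr // mulrAC.
    have [t00|tpos] := eqVneq t 0.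
      by rewrite /c t00 /sinc eqxx mul1r sin_le_id // ltW.
    have tpos' : 0 < t by rewrite lt_neqAle eq_sym tpos t0.
    rewrite /c /sinc (negbTE tpos).
    have := @sinc_mono t y tpos' (ltW yt) yp.
    by rewrite ler_pdivrMr // mulrAC.
have [xt|tx] := lerP x t.
- suff H : (- (cos + cst (c / 2) * (id * id)) : R -> R) x <= (- (cos + cst (c / 2) * (id * id))) t.
    by move: H; rewrite !fctE lerN2 !expr2.
  apply: (@mono_up _ (fun y => sin y - c * y) x t) => //.
  + move=> y _; apply: is_derive_eq.
    change (- (- sin y + (c / 2 * (y * 1 + y * 1) + y * y * 0)) = sin y - c * y).
    by field.
  + move=> y /andP[xy yt]; rewrite subr_ge0.
    apply: (proj1 (key y _ _)) => //; first by apply: le_lt_trans xy.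
    by rewrite ltW // (lt_le_trans yt).
- suff H : ((cos + cst (c / 2) * (id * id)) : R -> R) t <= (cos + cst (c / 2) * (id * id)) x.
    by move: H; rewrite !fctE !expr2.
  apply: (@mono_up _ (fun y => c * y - sin y) t x _ _ t x (lexx _) (ltW tx) (lexx _)).
  + move=> y _; apply: is_derive_eq.
    change (- sin y + (c / 2 * (y * 1 + y * 1) + y * y * 0) = c * y - sin y).
    by field.
  + move=> y /andP[ty yx]; rewrite subr_ge0.
    apply: (proj2 (key y _ _)) => //; first by apply: le_lt_trans ty.
    by rewrite ltW // (lt_le_trans yx).
Qed.

Lemma term_le (a y t : R) : 0 <= a -> `|y| <= pi -> - pi <= t <= pi ->
  - (a / 2 * sinc t) * y ^+ 2 + a * (cos t + 2^-1 * t * sin t) <= a * cos y.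
Proof.
move=> a0 yp tp.
have h := @core `|y| `|t|.
rewrite sinc_norm cos_norm cos_norm real_normK ?num_real // in h.
have -> : 2^-1 * t * sin t = 2^-1 * `|t| * sin `|t|.
  by case: (ler0P t) => _ //; rewrite sinN; ring.
rewrite -subr_le0.
set u := cos t + _.
have -> : - (a / 2 * sinc t) * y ^+ 2 + a * u - a * cos y
  = a * (u - (cos y + sinc t / 2 * y ^+ 2)) by ring.
apply: mulr_ge0_le0 => //; rewrite subr_le0; apply: h.
  by rewrite normr_ge0.
by rewrite normr_ge0 /= ler_norml.
Qed.

Lemma cos_per (x : R) (n : int) : cos (x + 2 * n%:~R * pi) = cos x.
Proof.
have key (m : nat) (y : R) : cos (y + 2 * m%:R * pi) = cos y.
  have -> : 2 * m%:R * pi = (pi *+ 2) *+ m :> R.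
    by rewrite -mulrnA -[pi *+ _]mulr_natr natrM mulrC mulrA.
  have := @periodicn R R cos (pi *+ 2) (@cosD2pi R) m y. by [].
case: n => m; first exact: key.
rewrite -(key m.+1 (x + _)); congr cos.
rewrite NegzE mulrNz pmulrn. ring.
Qed.
End S.

Theorem theorem2 (R : realType) (M T : nat) (hM : (2 <= M)%N)
  (hT0 : (0 < T)%N) (hTeven : ~~ odd T)
  (A phi : 'I_M -> 'I_M -> 'I_(T./2).+1 -> R)
  (hA : forall i j k, 0 <= A i j k)
  (tau : 'I_M -> R) (theta : 'I_M -> 'I_M -> 'I_(T./2).+1 -> R)
  (htheta : forall i j k, - pi <= theta i j k <= pi)
  (nu : 'I_M -> 'I_M -> 'I_(T./2).+1 -> int)
  (hnu : forall i j k, `|phase phi tau i j k + 2 * (nu i j k)%:~R * pi| <= pi) :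
  Qaux A phi tau theta nu <= Jobj A phi tau /\
  ((forall i j k, theta i j k = phase phi tau i j k + 2 * (nu i j k)%:~R * pi) ->
   Qaux A phi tau theta nu = Jobj A phi tau).
Proof.
have termle : forall i j k,
  - Bcoef A theta i j k * (phase phi tau i j k + 2 * (nu i j k)%:~R * pi) ^+ 2
    + A i j k * (cos (theta i j k) + 2^-1 * theta i j k * sin (theta i j k))
  <= A i j k * cos (phase phi tau i j k).
  move=> i j k; rewrite -[in X in _ <= X](@cos_per R _ (nu i j k)) /Bcoef.
  by apply: (@term_le R).
split.
  rewrite /Qaux /Jobj ler_wpM2l ?invr_ge0 ?ler0n //.
  apply: ler_sum => k _; apply: ler_sum => i _; apply: ler_sum => j _.
  exact: termle.
move=> hth; rewrite /Qaux /Jobj; congr (_ * _).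
apply: eq_bigr => k _; apply: eq_bigr => i _; apply: eq_bigr => j _.
rewrite -[in RHS](@cos_per R _ (nu i j k)) -hth /Bcoef.
have := @sinc_mul R (theta i j k); set c := sinc _ => ct.
rewrite -ct; ring.
Qed.
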